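(* Let $E,E_0$ be real Banach spaces and $F,G:[a,b]\to E$ maps with $G$ continuous. Let $\Phi\subset\mathcal L(E,E_0)$ be a separating set for $E$, and assume that for each $\phi\in\Phi$ the composition $\phi\circ F:[a,b]\to E_0$ is of class $C^1$ with $(\phi\circ F)'(t)=\phi(G(t))$ for all $t\in[a,b]$. Then $F$ is of class $C^1$ and $F'(t)=G(t)$ for all $t\in[a,b]$.
   Context: $\mathcal L(E,E_0)$ denotes the bounded linear operators $E\to E_0$. A subset $\Phi\subset\mathcal L(E,E_0)$ is separating for $E$ if for every $x\in E\setminus\{0\}$ there is $\phi\in\Phi$ with $\phi(x)\neq0$. *)

(* Defs.v *)
From HB Require Import structures.
From mathcomp Require Import all_boot all_order all_algebra.
From mathcomp Require Import all_classical all_reals all_analysis.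
Set Implicit Arguments. Unset Strict Implicit. Unset Printing Implicit Defensive.
Import Order.TTheory GRing.Theory Num.Theory.
Import numFieldNormedType.Exports.
Local Open Scope classical_set_scope.
Local Open Scope ring_scope.

(* For A = [a,b] this is the usual (one-sided at the
   endpoints) derivative on a closed interval. *)
Definition deriv_within {R : realType} {V : normedModType R}
  (A : set R) (f : R -> V) (t : R) (l : V) : Prop :=
  (fun h : R => h^-1 *: (f (t + h) - f t)) @ within (fun h => A (t + h)) 0^' --> l.

Definition C1_on {R : realType} {V : normedModType R}
  (a b : R) (f f' : R -> V) : Prop :=
  (forall t, `[a, b]%classic t -> deriv_within `[a, b]%classic f t (f' t)) /\
  {within `[a, b]%classic, continuous f'}.

Definition separating {R : realType} {E E0 : normedModType R}
  (Phi : set {linear E -> E0}) : Prop :=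
  forall x : E, x != 0 -> exists2 phi, Phi phi & phi x != 0.

(* Main.v *)
Require Import Defs.
From HB Require Import structures.
From mathcomp Require Import all_boot all_order all_algebra.
From mathcomp Require Import all_classical all_reals all_analysis.
From mathcomp Require Import ring lra.
Set Implicit Arguments. Unset Strict Implicit. Unset Printing Implicit Defensive.
Import Order.TTheory GRing.Theory Num.Theory.
Import numFieldNormedType.Exports.
Local Open Scope classical_set_scope.
Local Open Scope ring_scope.

Section S.
Variable R : realType.



Lemma quot_norm (V : normedModType R) (X l : V) (h : R) : h != 0 ->
  `|X - h *: l| = `|h| * `|l - h^-1 *: X|.
Proof.
move=> h0; rewrite -normrZ distrC scalerBr scalerA mulfV // scale1r.
by rewrite distrC.
Qed.

Lemma deriv_withinP (V : normedModType R) (A : set R) (f : R -> V) t l :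
  deriv_within A f t l <-> forall e, 0 < e -> exists2 d, 0 < d &
    forall h, h != 0 -> `|h| < d -> A (t + h) ->
      `|f (t + h) - f t - h *: l| <= e * `|h|.
Proof.
rewrite /deriv_within; split.
- move=> /cvgrPdist_le H e e0; have := H e e0.
  rewrite near_withinE /dnbhs near_withinE.
  move=> /nbhs_ballP [d d0 Hd]; exists d => // h h0 hd Ah.
  have : ball 0 d h by rewrite -ball_normE /= sub0r normrN.
  move=> /Hd /(_ h0) /(_ Ah) /= He.
  rewrite quot_norm // mulrC ler_wpM2r //.
- move=> H; apply/cvgrPdist_le => e e0.
  have [d d0 Hd] := H e e0.
  rewrite near_withinE /dnbhs near_withinE; apply/nbhs_ballP; exists d => // h.
  rewrite -ball_normE /= sub0r normrN => hd h0 Ah /=.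
  have := Hd h h0 hd Ah; rewrite quot_norm // mulrC ler_pM2r //.
  by rewrite normr_gt0.
Qed.


Lemma real_ind (P : R -> Prop) (a b : R) : a <= b -> P a ->
  (forall s, a <= s -> s < b -> P s -> exists2 d, 0 < d &
     forall u, s < u -> u <= s + d -> u <= b -> P u) ->
  (forall x, a < x -> x <= b -> (forall u, a <= u -> u < x -> P u) -> P x) ->
  forall x, a <= x -> x <= b -> P x.
Proof.
move=> ab Pa Hf Hb.
pose S := [set x | a <= x <= b /\ forall u, a <= u -> u <= x -> P u].
have Sa : S a.
  split; first by rewrite lexx ab.
  by move=> u au ua; have -> : u = a by apply/eqP; rewrite eq_le ua au.
have ubS : ubound S b by move=> x [/andP[_ ->]].
have hs : has_sup S by split; [exists a | exists b].
set s := sup S.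
have as_ : a <= s := sup_upper_bound hs Sa.
have sb : s <= b := ge_sup (ex_intro _ a Sa) ubS.
have below : forall u, a <= u -> u < s -> P u.
  move=> u au us.
  have us0 : 0 < s - u by rewrite subr_gt0.
  have [x [_ Sx] ux] := sup_adherent us0 hs.
  apply: Sx => //; apply: ltW; move: ux; rewrite /s; lra.
have Ps : P s.
  have [sa|sa] := eqVneq s a; first by rewrite sa.
  apply: Hb => //; rewrite lt_neqAle eq_sym sa as_ //.
have Ss : S s.
  split; first by rewrite as_ sb.
  move=> u au us; have [us'|su] := ltP u s; first exact: below.
  by have -> : u = s by apply/eqP; rewrite eq_le us su.
have sb' : s = b.
  apply/eqP; rewrite eq_le sb /= leNgt; apply/negP => sb2.
  have [d d0 Hd] := Hf s as_ sb2 Ps.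
  have [v [sv vb Hv]] : exists v, [/\ s < v, v <= b & forall u, s < u -> u <= v -> P u].
    have [sdb|sdb] := leP (s + d) b.
      exists (s + d); split => //; first lra.
      by move=> u su uv; apply: Hd => //; lra.
    exists b; split => //.
    by move=> u su uv; apply: Hd => //; lra.
  have Sv : S v.
    split; first by apply/andP; split => //; lra.
    move=> u au uv; have [us|su] := leP u s; first by case: Ss => _; apply.
    exact: Hv.
  have := sup_upper_bound hs Sv; rewrite -/s; lra.
move=> x ax xb; case: Ss => _; apply => //; lra.
Qed.


Lemma le0_of_all (x : R) : (forall e, 0 < e -> x <= e) -> x <= 0.
Proof.
move=> H; rewrite leNgt; apply/negP => x0.
have := H (x / 2); rewrite divr_gt0 // => /(_ isT); lra.
Qed.

Lemma zero_deriv (V : normedModType R) (g : R -> V) a b :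
  (forall t, a <= t <= b -> forall e, 0 < e -> exists2 d, 0 < d &
     forall h, h != 0 -> `|h| < d -> a <= t + h <= b -> `|g (t + h) - g t| <= e * `|h|) ->
  forall t, a <= t <= b -> g t = g a.
Proof.
move=> Hg t /andP[at_ tb].
suff H : forall e, 0 < e -> `|g t - g a| <= e * (t - a).
  apply/eqP; rewrite -subr_eq0 -normr_eq0 eq_le normr_ge0 andbT.
  apply: le0_of_all => e e0.
  have ta1 : 0 < t - a + 1 by lra.
  apply: le_trans (H (e / (t - a + 1)) (divr_gt0 e0 ta1)) _.
  rewrite -[leRHS](divfK (lt0r_neq0 ta1)) -/(e / (t - a + 1)).
  by rewrite ler_wpM2l ?divr_ge0 ?ltW //; lra.
move=> e e0.
pose P s := `|g s - g a| <= e * (s - a).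
apply: (@real_ind P a t) => //.
- by rewrite /P !subrr normr0 mulr0.
- move=> s as_ st Ps.
  have [d d0 Hd] := Hg s ltac:(apply/andP; split => //; lra) e e0.
  exists (d / 2); first by rewrite divr_gt0.
  move=> u su usd ut.
  have e1 : s + (u - s) = u by rewrite addrC subrK.
  have := Hd (u - s); rewrite e1 => /(_ _ _ _).
  move=> /(_ ltac:(rewrite subr_eq0 gt_eqF //)).
  move=> /(_ ltac:(rewrite gtr0_norm ?subr_gt0 //; lra)).
  move=> /(_ ltac:(apply/andP; split; lra)).
  rewrite gtr0_norm ?subr_gt0 // => Hu.
  rewrite /P; apply: le_trans (ler_distD (g s) _ _) _.
  move: Ps; rewrite /P => Ps; lra.
- move=> x ax xt Hb.
  have [d d0 Hd] := Hg x ltac:(apply/andP; split => //; lra) e e0.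
  have [u [au ux xud]] : exists u, [/\ a <= u, u < x & x - u < d].
    have [h|h] := leP a (x - d / 2).
      by exists (x - d / 2); split => //; lra.
    by exists a; split => //; lra.
  have e1 : x + (u - x) = u by rewrite addrC subrK.
  have := Hd (u - x); rewrite e1 => /(_ _ _ _).
  move=> /(_ ltac:(rewrite subr_eq0 lt_eqF //)).
  move=> /(_ ltac:(rewrite ltr0_norm ?subr_lt0 //; lra)).
  move=> /(_ ltac:(apply/andP; split; lra)).
  rewrite ltr0_norm ?subr_lt0 // => Hu.
  have Pu := Hb u au ux; move: Pu; rewrite /P => Pu.
  apply: le_trans (ler_distD (g u) _ _) _.
  rewrite distrC in Hu; lra.
Qed.


Lemma unif_cont (V : normedModType R) (G : R -> V) a b :
  (forall x, a <= x <= b -> forall e, 0 < e -> exists2 d, 0 < d &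
     forall u, a <= u <= b -> `|u - x| < d -> `|G u - G x| <= e) ->
  forall e, 0 < e -> exists2 eta, 0 < eta & forall u v, a <= u <= b -> a <= v <= b ->
     `|u - v| < eta -> `|G u - G v| <= e.
Proof.
move=> HG e e0.
have [ab|ba] := leP a b; last first.
  by exists 1 => // u v /andP[? ?]; lra.
have e20 : 0 < e / 2 by rewrite divr_gt0.
have close : forall x w1 w2 d,
    (forall w, a <= w <= b -> `|w - x| < d -> `|G w - G x| <= e / 2) ->
    a <= w1 <= b -> a <= w2 <= b -> x - d / 2 <= w1 -> w1 <= x + d / 2 ->
    `|w1 - w2| < d / 2 -> `|G w1 - G w2| <= e.
  move=> x u v d Hd hu hv u1 u2; rewrite ltr_norml => /andP[v1 v2].
  apply: le_trans (ler_distD (G x) _ _) _.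
  rewrite (distrC (G x)).
  have := Hd u hu ltac:(rewrite ltr_norml; apply/andP; split; clear -u1 u2 v1 v2; lra).
  have := Hd v hv ltac:(rewrite ltr_norml; apply/andP; split; clear -u1 u2 v1 v2; lra).
  clear; lra.
have close' : forall x u v d,
    (forall w, a <= w <= b -> `|w - x| < d -> `|G w - G x| <= e / 2) ->
    a <= u <= b -> a <= v <= b -> x - d / 2 <= u -> u <= x + d / 2 ->
    `|u - v| < d / 2 -> `|G v - G u| <= e.
  move=> x u v d Hd hu hv u1 u2 uv; rewrite distrC.
  exact: (close x u v d).
pose P s := exists2 eta, 0 < eta & forall u v, a <= u <= s -> a <= v <= s ->
     `|u - v| < eta -> `|G u - G v| <= e.
suff : P b by [].
apply: (@real_ind P a b) => //.
- exists 1 => // u v /andP[au ua] /andP[av va] _.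
  have -> : u = a by apply/eqP; rewrite eq_le au ua.
  have -> : v = a by apply/eqP; rewrite eq_le av va.
  by rewrite subrr normr0 ltW.
- move=> s as_ sb [eta eta0 Heta].
  have [d d0 Hd] := HG s ltac:(apply/andP; split => //; lra) _ e20.
  have d20 : 0 < d / 2 by rewrite divr_gt0.
  exists (d / 2) => //.
  move=> u' su' u'sd u'b.
  have [eta' [eta'0 eta'1 eta'2]] : exists eta', [/\ 0 < eta', eta' <= eta & eta' <= d / 2].
    have [h|h] := leP eta (d / 2).
      by exists eta; split => //.
    by exists (d / 2); split => //; lra.
  exists eta' => // u v /andP[au uu'] /andP[av vu'] uv.
  have hu : a <= u <= b by rewrite au (le_trans uu' u'b).
  have hv : a <= v <= b by rewrite av (le_trans vu' u'b).
  have uvd : `|u - v| < d / 2 := lt_le_trans uv eta'2.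
  have vud : `|v - u| < d / 2 by rewrite distrC.
  have [us|su] := leP u s; have [vs|sv] := leP v s.
  + by apply: Heta; rewrite ?au ?av ?us ?vs // (lt_le_trans uv eta'1).
  + apply: (close' s v u d Hd hv hu) => //; clear -sv d20 vu' u'sd; lra.
  + apply: (close s u v d Hd hu hv) => //; clear -su d20 uu' u'sd; lra.
  + apply: (close s u v d Hd hu hv) => //; clear -su d20 uu' u'sd; lra.
- move=> x ax xb Hb.
  have [d d0 Hd] := HG x ltac:(apply/andP; split => //; lra) _ e20.
  have d20 : 0 < d / 2 by rewrite divr_gt0.
  have [u0 [au0 u0x xu0d]] : exists u, [/\ a <= u, u < x & x - u <= d / 2].
    have [h|h] := leP a (x - d / 2).
      by exists (x - d / 2); split => //; lra.
    by exists a; split => //; lra.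
  have [eta eta0 Heta] := Hb u0 au0 u0x.
  have [eta' [eta'0 eta'1 eta'2]] : exists eta', [/\ 0 < eta', eta' <= eta & eta' <= d / 2].
    have [h|h] := leP eta (d / 2).
      by exists eta; split => //.
    by exists (d / 2); split => //; lra.
  exists eta' => // u v /andP[au ux] /andP[av vx] uv.
  have hu : a <= u <= b by rewrite au (le_trans ux xb).
  have hv : a <= v <= b by rewrite av (le_trans vx xb).
  have uvd : `|u - v| < d / 2 := lt_le_trans uv eta'2.
  have vud : `|v - u| < d / 2 by rewrite distrC.
  have [us|su] := leP u u0; have [vs|sv] := leP v u0.
  + by apply: Heta; rewrite ?au ?av ?us ?vs // (lt_le_trans uv eta'1).
  + apply: (close' x v u d Hd hv hu) => //; clear -sv d20 vx xu0d; lra.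
  + apply: (close x u v d Hd hu hv) => //; clear -su d20 ux xu0d; lra.
  + apply: (close x u v d Hd hu hv) => //; clear -su d20 ux xu0d; lra.
Qed.


Lemma subrACA' (W : zmodType) (x y z w : W) : (x - y) - (z - w) = (x - z) - (y - w).
Proof. by rewrite !opprB !addrA [x - y + w]addrAC [x - z + w]addrAC addrAC. Qed.

Lemma deriv_within_sub (V : normedModType R) (A : set R) (f g : R -> V) t l1 l2 :
  deriv_within A f t l1 -> deriv_within A g t l2 ->
  deriv_within A (fun x => f x - g x) t (l1 - l2).
Proof.
rewrite /deriv_within => D1 D2.
have -> : (fun h : R => h^-1 *: ((f (t + h) - g (t + h)) - (f t - g t))) =
  (fun h => h^-1 *: (f (t + h) - f t) - h^-1 *: (g (t + h) - g t)).
  by apply/funext => h /=; rewrite -scalerBr subrACA'.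
exact: (cvgB D1 D2).
Qed.

Lemma deriv_comp_lin (U W : normedModType R) (phi : {linear U -> W}) A f t l :
  continuous (phi : U -> W) -> deriv_within A f t l -> deriv_within A (phi \o f) t (phi l).
Proof.
rewrite /deriv_within => cphi D.
have -> : (fun h : R => h^-1 *: ((phi \o f) (t + h) - (phi \o f) t)) =
   phi \o (fun h => h^-1 *: (f (t + h) - f t)).
  by apply/funext => h /=; rewrite -linearB -linearZ.
by apply: continuous_cvg => //; exact: cphi.
Qed.

Lemma itvP' (a b x : R) : `[a, b]%classic x <-> a <= x <= b.
Proof. by rewrite /= in_itv. Qed.


Definition clampd (d u : R) := if u <= 0 then 0 else if u <= d then u else d.

Lemma clampd_ge0 d u : 0 <= d -> 0 <= clampd d u.
Proof. by rewrite /clampd => d0; case: (leP u 0) => // ?; case: (leP u d) => //; lra. Qed.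

Lemma clampd_le d u v : 0 <= d -> u <= v -> clampd d u <= clampd d v.
Proof.
rewrite /clampd => d0 uv.
by case: (leP u 0) => ?; case: (leP v 0) => ?; case: (leP u d) => ?; case: (leP v d) => ? //; lra.
Qed.

Lemma clampd_neq d u v : 0 <= d -> u <= v -> clampd d u != clampd d v -> 0 < v /\ u < d.
Proof.
rewrite /clampd => d0 uv.
by case: (leP u 0) => ?; case: (leP v 0) => ?; case: (leP u d) => ?; case: (leP v d) => ?;
  rewrite ?eqxx // neq_lt => /orP[] ?; split; lra.
Qed.

Lemma clampd_sum d u N : 0 <= d ->
  \sum_(k < N) clampd d (u - k%:R * d) = clampd (N%:R * d) u.
Proof.
move=> d0; elim: N => [|N IH].
  by rewrite big_ord0 mul0r /clampd; case: (leP u 0) => // ?; case: (leP u 0) => //; lra.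
rewrite big_ord_recr /= IH -addn1 natrD mulrDl mul1r.
have Nd : 0 <= N%:R * d by rewrite mulr_ge0.
move: Nd; set D := N%:R * d => Nd.
rewrite /clampd.
by case: (leP u 0) => ?; case: (leP u D) => ?; case: (leP (u - D) 0) => ?;
  case: (leP (u - D) d) => ?; case: (leP u (D + d)) => ?; lra.
Qed.


Section Construction.
Variables (V : normedModType R) (G : R -> V) (a b : R).

Definition dlt n := (b - a) / n.+1%:R.
Definition xk n (k : nat) := a + k%:R * dlt n.
Definition wk n k t := clampd (dlt n) (t - xk n k).
Definition Tn n t := \sum_(k < n.+1) wk n k t *: G (xk n k).

Lemma dlt_ge0 n : a <= b -> 0 <= dlt n.
Proof. by move=> ab; rewrite /dlt divr_ge0 // subr_ge0. Qed.

Lemma Ndlt n : n.+1%:R * dlt n = b - a.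
Proof. by rewrite /dlt mulrC divfK // pnatr_eq0. Qed.

Lemma xk_in n k : a <= b -> (k < n.+1)%N -> a <= xk n k <= b.
Proof.
move=> ab kn; have d0 := dlt_ge0 n ab.
have h1 : 0 <= k%:R * dlt n by rewrite mulr_ge0.
have h2 : k%:R * dlt n <= n.+1%:R * dlt n.
  by rewrite ler_wpM2r // ler_nat ltnW.
rewrite Ndlt in h2; rewrite /xk; apply/andP; split; lra.
Qed.

Lemma wkE n k t : wk n k t = clampd (dlt n) ((t - a) - k%:R * dlt n).
Proof. by rewrite /wk /xk opprD addrA. Qed.

Lemma wk_sum n t : a <= t <= b -> \sum_(k < n.+1) wk n k t = t - a.
Proof.
move=> /andP[at_ tb].
have ab : a <= b by lra.
under eq_bigr do rewrite wkE.
rewrite clampd_sum ?dlt_ge0 // Ndlt /clampd.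
by case: (leP (t - a) 0) => ?; case: (leP (t - a) (b - a)) => ?; lra.
Qed.

Lemma wk_ge0 n k t : a <= b -> 0 <= wk n k t.
Proof. by move=> ab; rewrite /wk clampd_ge0 // dlt_ge0. Qed.

Lemma Tn_a n : a <= b -> Tn n a = 0.
Proof.
move=> ab; rewrite /Tn big1 // => k _.
rewrite wkE subrr sub0r /clampd.
have : 0 <= k%:R * dlt n by rewrite mulr_ge0 ?dlt_ge0.
by case: (leP (- (k%:R * dlt n)) 0) => ? ?; [rewrite scale0r | exfalso; lra].
Qed.

Lemma KE n s t c e : a <= s -> s <= t -> t <= b -> 0 <= e ->
  (forall u, a <= u <= b -> s - dlt n < u -> u < t -> `|G u - G c| <= e) ->
  `|Tn n t - Tn n s - (t - s) *: G c| <= e * (t - s).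
Proof.
move=> as_ st tb e0 HG.
have ab : a <= b by lra.
have d0 := dlt_ge0 n ab.
have -> : t - s = \sum_(k < n.+1) (wk n k t - wk n k s).
  have hs : a <= s <= b by apply/andP; split; lra.
  have ht : a <= t <= b by apply/andP; split; lra.
  by rewrite sumrB (wk_sum n hs) (wk_sum n ht) opprB addrA subrK.
rewrite /Tn -sumrB scaler_suml -sumrB.
under eq_bigr do rewrite -scalerBl -scalerBr.
apply: le_trans (ler_norm_sum _ _ _) _.
rewrite mulr_sumr; apply: ler_sum => k _.
have wle : wk n k s <= wk n k t by apply: clampd_le => //; lra.
rewrite normrZ ger0_norm ?subr_ge0 // mulrC.
have [weq|wne] := eqVneq (wk n k s) (wk n k t).
  by rewrite weq subrr !mulr0.
apply: ler_wpM2r; first by rewrite subr_ge0.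
have stx : s - xk n k <= t - xk n k by lra.
have [h1 h2] := clampd_neq d0 stx wne.
apply: HG; first exact: xk_in.
  lra.
lra.
Qed.

Lemma small_dlt r : a <= b -> 0 < r -> exists N, forall n, (N <= n)%N -> dlt n < r.
Proof.
move=> ab r0; exists (Num.trunc ((b - a) / r)) => n Nn.
have h := truncnS_gt ((b - a) / r).
rewrite ltr_pdivrMr // in h.
rewrite /dlt ltr_pdivrMr //; apply: lt_le_trans h _.
rewrite [r * _]mulrC; apply: ler_wpM2r; [exact: ltW | by rewrite ler_nat].
Qed.

Lemma Tn_cauchy :
  (forall e, 0 < e -> exists2 eta, 0 < eta & forall u v, a <= u <= b -> a <= v <= b ->
     `|u - v| < eta -> `|G u - G v| <= e) ->
  forall t, a <= t <= b -> forall eps, 0 < eps ->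
  exists N, forall n m, (N <= n)%N -> (N <= m)%N -> `|Tn n t - Tn m t| < eps.
Proof.
move=> HU t /andP[at_ tb] eps eps0.
have ab : a <= b by lra.
have ba0 : 0 < 2 * (b - a) + 1 by lra.
pose e := eps / (2 * (b - a) + 1).
have e0 : 0 < e by rewrite divr_gt0.
have He : e * (2 * (b - a) + 1) = eps by rewrite /e divfK // gt_eqF.
have [eta eta0 Heta] := HU e e0.
have [N HN] := small_dlt ab eta0.
pose M := N.+1.
have M0 : 0 < M%:R :> R by rewrite ltr0n.
pose h := (t - a) / M%:R.
have h0 : 0 <= h by apply: divr_ge0; [lra | exact: ltW].
have hM : M%:R * h = t - a by rewrite /h mulrC divfK // gt_eqF.
have hb : h < eta.
  apply: le_lt_trans (HN N (leqnn N)); rewrite /h /dlt.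
  apply: ler_wpM2r; [by rewrite invr_ge0 ltW | lra].
pose c (i : nat) := a + i%:R * h.
pose Rs := \sum_(i < M) h *: G (c i).
have claim : forall n, (N <= n)%N -> `|Tn n t - Rs| <= e * (t - a).
  move=> n Nn.
  have tel : Tn n t = \sum_(i < M) (Tn n (c i.+1) - Tn n (c i)).
    rewrite -(big_mkord xpredT (fun i => Tn n (c i.+1) - Tn n (c i))).
    rewrite telescope_sumr // /c mul0r addr0 Tn_a // subr0.
    by rewrite hM addrC subrK.
  rewrite tel /Rs -sumrB.
  apply: le_trans (ler_norm_sum _ _ _) _.
  have -> : e * (t - a) = \sum_(i < M) e * h.
    by rewrite sumr_const card_ord -mulr_natr -hM mulrCA mulrC.
  apply: ler_sum => i _.
  have hci : c i.+1 - c i = h by rewrite /c -addn1 natrD mulrDl mul1r addrA addrC addrK.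
  rewrite -hci.
  have iM : (i.+1 <= M)%N := ltn_ord i.
  have ci1 : c i.+1 <= t.
    have : i.+1%:R * h <= M%:R * h by apply: ler_wpM2r => //; rewrite ler_nat.
    rewrite /c; lra.
  have cia : a <= c i.
    have : 0 <= i%:R * h by rewrite mulr_ge0.
    rewrite /c; lra.
  apply: KE => //; try lra.
  move=> u hu u1 u2.
  apply: Heta => //; first by apply/andP; split; lra.
  have := HN n Nn; rewrite ltr_norml => ?; apply/andP; split; lra.
have tri : forall n m, (N <= n)%N -> (N <= m)%N -> `|Tn n t - Tn m t| <= 2 * (e * (t - a)).
  move=> n m Nn Nm.
  apply: le_trans (ler_distD Rs _ _) _.
  rewrite (distrC Rs); have := claim n Nn; have := claim m Nm; lra.
exists N => n m Nn Nm; apply: le_lt_trans (tri n m Nn Nm) _.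
have : e * (t - a) <= e * (b - a) by apply: ler_wpM2l; [exact: ltW | lra].
have : e * (2 * (b - a) + 1) = 2 * (e * (b - a)) + e by ring.
lra.
Qed.

End Construction.

Lemma seq_cauchy_cvg (V : completeNormedModType R) (u : nat -> V) :
  (forall e : R, 0 < e -> exists N, forall n m, (N <= n)%N -> (N <= m)%N -> `|u n - u m| < e) ->
  cvgn u.
Proof.
move=> H; apply: cauchy_cvg; apply/cauchy_ballP => e e0.
have [N HN] := H e e0.
pose A := [set x | exists2 n, (N <= n)%N & x = u n].
exists (A, A).
  by split; exists N => // n /= Nn; exists n.
move=> [x y] /= [[n Nn ->] [m Nm ->]].
rewrite -ball_normE /=.
exact: HN.
Qed.

Lemma lim_norm_le (V : normedModType R) (u : nat -> V) l r :
  u n @[n --> \oo] --> l -> (\forall n \near \oo, `|u n| <= r) -> `|l| <= r.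
Proof.
move=> ul H; have Hn : `|u n| @[n --> \oo] --> `|l| by apply: cvg_norm.
rewrite -(cvg_lim _ Hn) //; apply: limr_le => //; exact: cvgP Hn.
Qed.

Section Limit.
Variables (V : completeNormedModType R) (G : R -> V) (a b : R).
Hypothesis HU : forall e, 0 < e -> exists2 eta, 0 < eta & forall u v, a <= u <= b -> a <= v <= b ->
     `|u - v| < eta -> `|G u - G v| <= e.

Definition Iint t := lim (Tn G a b n t @[n --> \oo]).

Lemma Tn_cvg t : a <= t <= b -> Tn G a b n t @[n --> \oo] --> Iint t.
Proof.
move=> ht; apply: seq_cauchy_cvg; exact: Tn_cauchy.
Qed.

Lemma Iint_a : a <= b -> Iint a = 0.
Proof.
move=> ab; rewrite /Iint (_ : (fun n => Tn G a b n a) = fun=> 0); first by rewrite lim_cst.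
by apply/funext => n; rewrite Tn_a.
Qed.

Lemma I_est s t p e r : a <= s -> s <= t -> t <= b -> 0 <= e -> 0 < r ->
  (forall u, a <= u <= b -> s - r < u -> u < t -> `|G u - G p| <= e) ->
  `|Iint t - Iint s - (t - s) *: G p| <= e * (t - s).
Proof.
move=> as_ st tb e0 r0 HG.
have ab : a <= b by lra.
have ht : a <= t <= b by apply/andP; split; lra.
have hs : a <= s <= b by apply/andP; split; lra.
have cv : (fun n => Tn G a b n t - Tn G a b n s - (t - s) *: G p) n @[n --> \oo] -->
    Iint t - Iint s - (t - s) *: G p.
  apply: cvgB; last exact: cvg_cst.
  by apply: cvgB; apply: Tn_cvg.
apply: (lim_norm_le cv).
have [N HN] := small_dlt ab r0.
exists N => // n /= Nn.
apply: KE => //.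
move=> u hu u1 u2; apply: HG => //.
have := HN n Nn; lra.
Qed.

End Limit.

End S.

Section M.
Variable R : realType.

Lemma negE (V : normedModType R) (X Y g : V) (h : R) :
  X - Y - h *: g = - (Y - X - (- h) *: g).
Proof. by rewrite scaleNr opprB opprB addrC. Qed.

Lemma I_deriv (V : completeNormedModType R) (G : R -> V) a b
  (HU : forall e, 0 < e -> exists2 eta, 0 < eta & forall u v, a <= u <= b -> a <= v <= b ->
     `|u - v| < eta -> `|G u - G v| <= e)
  (Hc : forall x, a <= x <= b -> forall e, 0 < e -> exists2 d, 0 < d &
     forall u, a <= u <= b -> `|u - x| < d -> `|G u - G x| <= e)
  p : a <= p <= b -> deriv_within `[a, b]%classic (Iint G a b) p (G p).
Proof.
move=> /andP[ap pb]; apply/deriv_withinP => e e0.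
have [d d0 Hd] := Hc p ltac:(by rewrite ap pb) e e0.
exists d => // h h0 hd /itvP' /andP[aph phb].
have [hpos|hneg] := ltP 0 h.
- rewrite gtr0_norm // in hd *.
  have := @I_est R V G a b HU p (p + h) p e (d - h) ap ltac:(lra) phb (ltW e0) ltac:(lra).
  have -> : p + h - p = h by rewrite addrAC subrr add0r.
  apply => u hu u1 u2; apply: Hd hu _; rewrite ltr_norml; apply/andP; split; lra.
- have hn : h < 0 by rewrite lt_neqAle h0 hneg.
  rewrite ltr0_norm // in hd *.
  have := @I_est R V G a b HU (p + h) p p e (d + h) aph ltac:(lra) pb (ltW e0) ltac:(lra).
  have -> : p - (p + h) = - h by rewrite opprD addrA subrr add0r.
  rewrite negE normrN.
  apply => u hu u1 u2; apply: Hd hu _; rewrite ltr_norml; apply/andP; split; lra.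
Qed.

End M.

Unset Implicit Arguments.
Set Strict Implicit.

Theorem lemma2p3 (R : realType) (E E0 : completeNormedModType R)
  (a b : R) (F G : R -> E) (Phi : set {linear E -> E0}) :
  {within `[a, b]%classic, continuous G} ->
  (forall phi, Phi phi -> continuous (phi : E -> E0)) ->
  separating Phi ->
  (forall phi, Phi phi -> C1_on a b (phi \o F) (phi \o G)) ->
  C1_on a b F G.
Proof.
move=> Gc Phic sep HPhi; split => //.
have Hc : forall x, a <= x <= b -> forall e, 0 < e -> exists2 d, 0 < d &
     forall u, a <= u <= b -> `|u - x| < d -> `|G u - G x| <= e.
  move=> x hx e e0.
  move/subspace_continuousP: Gc => /(_ x (proj2 (itvP' a b x) hx)).
  move=> /cvgrPdist_le /(_ e e0); rewrite near_withinE.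
  move=> /nbhs_ballP [d d0 Hd]; exists d => // u hu hux.
  have : ball x d u by rewrite -ball_normE /= distrC.
  move=> /Hd /(_ (proj2 (itvP' a b u) hu)) /=.
  by rewrite distrC.
have HU := unif_cont Hc.
move=> t /itvP' tab.
have ab : a <= b by case/andP: tab => ? ?; lra.
have ID : forall p, a <= p <= b -> deriv_within `[a, b]%classic (Iint G a b) p (G p).
  by move=> p hp; apply: I_deriv.
have FI : forall p, a <= p <= b -> F p = F a + Iint G a b p.
  move=> p hp; apply/eqP; rewrite -subr_eq0; apply/negPn/negP => ne0.
  have [phi Pphi] := sep _ ne0; apply/negP; rewrite negbK.
  have gz : forall q, a <= q <= b ->
      phi (F q) - phi (Iint G a b q) = phi (F a) - phi (Iint G a b a).
    apply: (@zero_deriv R E0 (fun q => phi (F q) - phi (Iint G a b q)) a b) => q hq e e0.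
    have D1 := (HPhi phi Pphi).1 q (proj2 (itvP' a b q) hq).
    have D2 := deriv_comp_lin (Phic phi Pphi) (ID q hq).
    have D := deriv_within_sub D1 D2.
    rewrite /= subrr in D.
    have [d d0 Hd] := (deriv_withinP _ _ _ _).1 D e e0.
    exists d => // h h0 hd hqh.
    have := Hd h h0 hd (proj2 (itvP' a b (q + h)) hqh).
    by rewrite scaler0 subr0.
  have := gz p hp; rewrite Iint_a // linear0 subr0 => eq.
  by rewrite linearB linearD /= opprD addrA addrAC eq subrr.
apply/deriv_withinP => e e0.
have [d d0 Hd] := (deriv_withinP _ _ _ _).1 (ID t tab) e e0.
exists d => // h h0 hd Ah.
have ht' : a <= t + h <= b by apply/itvP'.
rewrite (FI (t + h) ht') (FI t tab).
by rewrite [F a + _]addrC addrKA; apply: Hd.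
Qed.
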